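(* Let $G$ be a finite solvable group and let $1=H_0 \triangleleft H_1\triangleleft\cdots\triangleleft H_m=G$ be a strictly ascending series of normal subgroups of $G$ such that $H_i=\gamma_{k_i}(H_{i+1})$ with $k_i\in\mathbb{N}\cup\{\infty\}$ for $i\in\{1,\dots,m-1\}$ and $k_0=\infty$. Let $c=\lvert\{i\in\{1,\dots,m-1\}:k_i=\infty\}\rvert$ and $C=\prod_{k_i<\infty}(k_i+1)$, and set $D=c/C^{1/c}$. Then the $n$-input AND function can be computed by a $G$-program of length $O(2^{Dn^{1/c}})$. More precisely, for every $n\in\mathbb{N}$ there exist $1\neq g\in G$ and a $G$-program $Q_n$ over variables $B_1,\dots,B_n$ of length $O(2^{Dn^{1/c}})$ such that for every assignment $\sigma:\{B_1,\dots,B_n\}\to\{0,1\}$, $\sigma(Q_n)=g$ if $\sigma(B_1)=\cdots=\sigma(B_n)=1$ and $\sigma(Q_n)=1$ otherwise.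
   Context: Commutators: $[x,y]=x^{-1}y^{-1}xy$; for subgroups $A,B$, $[A,B]$ is the subgroup generated by all $[a,b]$, and $[A_1,\dots,A_k]=[[A_1,\dots,A_{k-1}],A_k]$. For a group $H$ and $k\in\mathbb{N}$, $\gamma_kH=[H,H,\dots,H]$ with $k+1$ copies of $H$ (so $\gamma_1H=[H,H]$), and $\gamma_\infty H$ (the nilpotent residual) is $\gamma_iH$ for all sufficiently large $i$. An $n$-input $G$-program of length $\ell$ is a sequence $\langle B_{i_1},a_1,b_1\rangle\cdots\langle B_{i_\ell},a_\ell,b_\ell\rangle$ with $B_{i_j}\in\{B_1,\dots,B_n\}$ and $a_j,b_j\in G$; for $\sigma:\{B_1,\dots,B_n\}\to\{0,1\}$, $\sigma(P)=c_1\cdots c_\ell\in G$ where $c_j=a_j$ if $\sigma(B_{i_j})=0$ and $c_j=b_j$ if $\sigma(B_{i_j})=1$. A $G$-program $P$ computes $f:\{0,1\}^n\to\{0,1\}$ if there is $S\subseteq G$ with $\sigma(P)\in S$ iff $f(\sigma)=1$. *)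

(* Defs.v *)
From Stdlib Require Import Reals.
From mathcomp Require Import all_boot all_fingroup all_solvable.
Set Implicit Arguments. Unset Strict Implicit. Unset Printing Implicit Defensive.

Local Open Scope group_scope.

(* gamma_k(B) = [B,...,B] with k+1 copies of B = 'L_(k+1)(B) in MathComp
   ('L_1(B) = B, 'L_2(B) = [~: B, B]).  [~ x, y] = x^-1 * y^-1 * x * y.
   k = None encodes k = infinity: A is the nilpotent residual gamma_infty(B),
   i.e. A = gamma_j(B) for all sufficiently large j. *)
Definition is_gamma (gT : finGroupType) (k : option nat) (A B : {set gT}) : Prop :=
  match k with
  | Some k => A = 'L_k.+1(B)
  | None => exists N, forall j, (N <= j)%N -> A = 'L_j.+1(B)
  end.

(* An n-input G-program: a sequence of instructions <B_i, a, b> with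
   i : 'I_n (variable B_(i+1)) and a, b group elements. *)
Definition program (gT : finGroupType) (n : nat) := seq ('I_n * gT * gT).

Definition prog_eval (gT : finGroupType) (n : nat) (P : program gT n)
    (sigma : 'I_n -> bool) : gT :=
  foldr (fun ins acc => (if sigma ins.1.1 then ins.2 else ins.1.2) * acc) 1 P.

Definition prog_over (gT : finGroupType) (n : nat) (G : {set gT}) (P : program gT n) :=
  all (fun ins => (ins.1.2 \in G) && (ins.2 \in G)) P.

Definition count_inf (k : nat -> option nat) (m : nat) : nat :=
  count (fun i => k i == None) (iota 1 m.-1).

Definition prod_fin (k : nat -> option nat) (m : nat) : nat :=
  \prod_(1 <= i < m) (if k i is Some ki then ki.+1 else 1).

Definition and_bound (c C n : nat) : R :=
  let D := Rdiv (INR c) (Rpower (INR C) (Rinv (INR c))) in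
  Rpower 2 (Rmult D (Rpower (INR n) (Rinv (INR c)))).

(* Main.v *)
Require Import Defs.
From Stdlib Require Import Reals.
From mathcomp Require Import all_boot all_fingroup all_solvable.
From mathcomp Require Import zify.
Set Implicit Arguments. Unset Strict Implicit. Unset Printing Implicit Defensive.
Local Open Scope group_scope.

Section GroupPart.
Variable gT : finGroupType.
Variable G : {group gT}.

Lemma commset_sub (X W : {set gT}) : X \subset G -> W \subset G -> commg_set X W \subset G.
Proof.
move=> sX sW; apply/subsetP=> _ /imset2P[x w Xx Ww ->].
by apply: groupR; [apply: (subsetP sX) | apply: (subsetP sW)].
Qed.

Lemma commset_norm (X W : {set gT}) : G \subset 'N(X) -> G \subset 'N(W) ->
  G \subset 'N(commg_set X W).
Proof.
move=> nX nW; apply/subsetP=> g Gg; rewrite inE; apply/subsetP=> _ /imsetP[_ /imset2P[x w Xx Ww ->] ->].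
rewrite conjRg; apply: imset2_f.
  by rewrite memJ_norm // (subsetP nX).
by rewrite memJ_norm // (subsetP nW).
Qed.

Lemma commgen (X W : {set gT}) : X \subset G -> W \subset G ->
  G \subset 'N(X) -> G \subset 'N(W) ->
  [~: X, W] = [~: <<X>>, <<W>>].
Proof.
move=> sX sW nX nW; apply/eqP; rewrite eqEsubset; apply/andP; split; first by rewrite commgSS ?sub_gen.
have nU : G \subset 'N([~: X, W]) by apply: normsR.
have nXU : X \subset 'N([~: X, W]) by apply: subset_trans nU.
have nWU : W \subset 'N([~: X, W]) by apply: subset_trans nU.
rewrite -quotient_cents2 ?gen_subG //.
rewrite quotient_gen // gen_subG quotient_gen // /= cent_gen.
exact: quotient_cents2r.
Qed.

Definition iterS (A W : {set gT}) t := iter t (fun S => commg_set S W) A.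

Lemma iterS_props (A W : {set gT}) t : A \subset G -> W \subset G ->
  G \subset 'N(A) -> G \subset 'N(W) ->
  iterS A W t \subset G /\ G \subset 'N(iterS A W t).
Proof.
move=> sA sW nA nW; elim: t => [|t [IH1 IH2]] //=.
by split; [apply: commset_sub | apply: commset_norm].
Qed.

Lemma iterS_gen (A W : {set gT}) t : A \subset G -> W \subset G ->
  G \subset 'N(A) -> G \subset 'N(W) ->
  <<iterS A W t.+1>> = [~: <<iterS A W t>>, <<W>>].
Proof.
move=> sA sW nA nW; have [s1 s2] := iterS_props t sA sW nA nW.
by rewrite /= -commgen.
Qed.

End GroupPart.

Section ProgPart.
Variable gT : finGroupType.
Variable G : {group gT}.
Variable n : nat.
Variable i0 : 'I_n.

Definition pinv (P : program gT n) : program gT n :=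
  rev (map (fun ins => (ins.1.1, ins.1.2^-1, ins.2^-1)) P).

Lemma eval_cat (P Q : program gT n) s : prog_eval (P ++ Q) s = prog_eval P s * prog_eval Q s.
Proof. by elim: P => [|x P IH] /=; rewrite ?mul1g // IH mulgA. Qed.

Lemma eval_inv (P : program gT n) s : prog_eval (pinv P) s = (prog_eval P s)^-1.
Proof.
elim: P => [|x P IH]; first by rewrite /= invg1.
rewrite /pinv map_cons rev_cons -cats1 eval_cat -/(pinv P) IH /= invMg mulg1.
by case: (s _).
Qed.

Lemma over_cat (P Q : program gT n) : prog_over G (P ++ Q) = prog_over G P && prog_over G Q.
Proof. by rewrite /prog_over all_cat. Qed.

Lemma over_inv (P : program gT n) : prog_over G (pinv P) = prog_over G P.
Proof.
rewrite /prog_over /pinv all_rev all_map; apply: eq_all => x /=.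
by rewrite !groupV.
Qed.

Lemma size_inv (P : program gT n) : size (pinv P) = size P.
Proof. by rewrite /pinv size_rev size_map. Qed.

Definition computes (P : program gT n) (h : gT) (X : seq 'I_n) :=
  forall s, prog_eval P s = if all s X then h else 1.

Definition good (N L : nat) (h : gT) := forall X : seq 'I_n, size X <= N ->
  exists P : program gT n, [/\ prog_over G P, size P <= L & computes P h X].

Lemma good_weak N L N' L' h : good N L h -> N' <= N -> L <= L' -> good N' L' h.
Proof.
move=> gh le1 le2 X sX; have [|P [P1 P2 P3]] := gh X; first exact: leq_trans le1.
by exists P; split => //; apply: leq_trans le2.
Qed.

Lemma good_const a : a \in G -> good 0 1 a.
Proof.
move=> Ga [|x X] // _; exists [:: (i0, a, a)]; split => //.
  by rewrite /prog_over /= Ga.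
by move=> s /=; rewrite mulg1; case: (s i0).
Qed.

Lemma good_top a : a \in G -> good 1 1 a.
Proof.
move=> Ga [|x [|y X]] // _; first exact: good_const.
exists [:: (x, 1, a)]; split => //.
  by rewrite /prog_over /= Ga group1.
by move=> s /=; rewrite mulg1 andbT.
Qed.

Lemma good_comm x y N1 N2 L1 L2 : good N1 L1 x -> good N2 L2 y ->
  good (N1 + N2) (2 * (L1 + L2)) [~ x, y].
Proof.
move=> gx gy X sX.
have [|P [P1 P2 P3]] := gx (take N1 X); first by rewrite size_take_min; lia.
have [|Q [Q1 Q2 Q3]] := gy (drop N1 X); first by rewrite size_drop; lia.
exists (pinv P ++ pinv Q ++ P ++ Q); split.
- by rewrite !over_cat !over_inv P1 Q1.
- rewrite !size_cat !size_inv; lia.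
move=> s; rewrite !eval_cat !eval_inv P3 Q3.
have -> : all s X = all s (take N1 X) && all s (drop N1 X) by rewrite -all_cat cat_take_drop.
case: (all s (take N1 X)); case: (all s (drop N1 X)) => /=;
  rewrite ?invg1 ?mul1g ?mulg1 ?mulVg //.

Qed.

Lemma good_iter (A W : {set gT}) N0 L0 N L :
  (forall a, a \in A -> good N0 L0 a) -> (forall w, w \in W -> good N L w) ->
  forall t s, s \in iter t (fun S => commg_set S W) A ->
    good (N0 + t * N) (2 ^ t * (L0 + 2 * L) - 2 * L) s.
Proof.
move=> gA gW; elim => [|t IH] s /=.
  by move=> /gA H; apply: good_weak H _ _; rewrite ?expn0; lia.
case/imset2P => x w Sx Ww ->.
apply: good_weak (good_comm (IH _ Sx) (gW _ Ww)) _ _; first by lia.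
have p1 : (1 <= 2 ^ t)%N by rewrite expn_gt0.
have Y1 : (L0 + 2 * L <= 2 ^ t * (L0 + 2 * L))%N by rewrite leq_pmull.
rewrite expnS -mulnA.
move: Y1; set Y := (2 ^ t * _)%N; lia.
Qed.

End ProgPart.

Definition fac (k : nat -> option nat) d l := if k l is Some kk then kk.+1 else d.
Definition NN k d i m := (\prod_(i <= l < m) fac k d l)%N.
Definition KK (k : nat -> option nat) i m :=
  (\prod_(i <= l < m) (3 * 2 ^ (if k l is Some kk then kk else 0)))%N.
Definition cc (k : nat -> option nat) i m := (\sum_(i <= l < m) (k l == None))%N.

Lemma KK_gt0 k i m : (0 < KK k i m)%N.
Proof. by apply: prodn_gt0 => l; rewrite muln_gt0 expn_gt0. Qed.

Lemma levels (gT : finGroupType) (G : {group gT}) (m : nat)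
    (H : nat -> {group gT}) (k : nat -> option nat) n (i0 : 'I_n) d :
  H m = G -> (forall i, (i <= m)%N -> (H i <| G)%g) ->
  (forall i, (1 <= i < m)%N -> is_gamma (k i) (H i) (H i.+1)) ->
  forall j, (j < m)%N -> exists W : {set gT},
    [/\ W \subset G, G \subset 'N(W), <<W>> = H (m - j) &
      forall w, w \in W -> good G n (NN k d (m - j) m)
                  (KK k (m - j) m * 2 ^ (d * cc k (m - j) m))%N w].
Proof.
move=> Hm nH gam; elim=> [|j IH] ltjm.
  exists (G : {set gT}); split.
  - exact: subxx.
  - exact: normG.
  - by rewrite subn0 Hm genGid.
  move=> w Gw; rewrite subn0 /NN /KK /cc !big_geq // muln0 expn0.
  exact: (good_top i0 Gw).
have [|W [sW nW gW goodW]] := IH; first by lia.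
set i := (m - j.+1)%N.
have ei : (m - j = i.+1)%N by rewrite /i; lia.
rewrite ei in gW goodW.
have lt_im : (i < m)%N by rewrite /i; lia.
have i1 : (1 <= i < m)%N by rewrite /i; apply/andP; split; lia.
have nHi := nH i (ltnW lt_im).
have sHi : (H i \subset G) := normal_sub nHi.
have nnHi : G \subset 'N(H i) := normal_norm nHi.
rewrite /NN /KK /cc (big_ltn lt_im) (big_ltn lt_im) (big_ltn lt_im) -/(NN k d i.+1 m) -/(KK k i.+1 m) -/(cc k i.+1 m).
have K1 := KK_gt0 k i.+1 m.
move: (gam i i1); rewrite /fac.
case: (k i) => [kk|] /= hg.
- exists (iterS W W kk).
  have [s1 s2] := iterS_props kk sW sW nW nW.
  split => //.
    rewrite hg; elim: (kk) => [|t IHt]; first by rewrite gW.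
    by rewrite (iterS_gen t sW sW nW nW) IHt gW.
  move=> w Ww; have := good_iter goodW goodW Ww.
  move/good_weak; apply; first by lia.
  rewrite add0n.
  set L := (KK k i.+1 m * _)%N.
  have L0 : (0 < L)%N by rewrite /L muln_gt0 K1 expn_gt0.
  rewrite -[X in (_ <= X)%N]mulnA -/L.
  set p := (2 ^ kk)%N.
  nia.
- have [N hN] := hg.
  have eH : (H i : {set gT}) = [~: H i, H i.+1].
    have e1 := hN N (leqnn N); have e2 := hN N.+1 (leqnSn N).
    by rewrite [in RHS]e1 -lcnSn -e2.
  exists (iterS (H i) W d).
  have [s1 s2] := iterS_props d sHi sW nnHi nW.
  split => //.
    elim: (d) => [|t IHt]; first by rewrite /= genGid.
    by rewrite (iterS_gen t sHi sW nnHi nW) IHt gW -eH.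
  move=> w Ww.
  have gc : forall a, a \in H i -> good G n 0 1 a.
    by move=> a Ha; apply: (good_const i0); apply: (subsetP sHi).
  have := good_iter gc goodW Ww.
  move/good_weak; apply; first by lia.
  have e : (d * (1 + cc k i.+1 m) = d + d * cc k i.+1 m)%N by rewrite mulnDr muln1.
  rewrite e expnD expn0 muln1.
  have Q0 : (0 < 2 ^ (d * cc k i.+1 m))%N by rewrite expn_gt0.
  have p1 : (0 < 2 ^ d)%N by rewrite expn_gt0.
  move: K1 Q0 p1.
  set Q := (2 ^ (d * cc k i.+1 m))%N; set K := KK k i.+1 m; set p := (2 ^ d)%N.
  move=> K1 Q0 p1.
  nia.
Qed.

Local Close Scope group_scope.
Local Open Scope R_scope.
From Stdlib Require Import Lra Psatz.
From Stdlib Require ZArith.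

Lemma INR_expn b e : INR (b ^ e)%N = pow (INR b) e.
Proof.
elim: e => [|e IH]; first by rewrite expn0.
by rewrite expnS mulnE mult_INR IH.
Qed.

Lemma cc_count k m : cc k 1 m = count_inf k m.
Proof.
rewrite /cc /count_inf /index_iota subn1.
elim: (iota 1 m.-1) => [|x s IH]; first by rewrite big_nil.
by rewrite big_cons IH.
Qed.

Lemma NN_eq k d m : NN k d 1 m = (d ^ count_inf k m * prod_fin k m)%N.
Proof.
rewrite /NN /prod_fin /count_inf /index_iota subn1.
elim: (iota 1 m.-1) => [|x s IH]; first by rewrite !big_nil.
rewrite !big_cons IH /fac /=; case: (k x) => [kk|] /=.
  by rewrite add0n mulnCA.
by rewrite mul1n add1n expnS -mulnA.
Qed.

Lemma rp_pow (x : R) c : (0 < x) -> (0 < c)%N -> pow (Rpower x (/ INR c)) c = x.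
Proof.
move=> x0 c0.
have cR : INR c <> 0 by apply: not_0_INR; case: c c0.
rewrite -Rpower_pow; last by apply: exp_pos.
by rewrite Rpower_mult Rinv_l // Rpower_1.
Qed.

Lemma all_enum_forall n (s : 'I_n -> bool) : all s (enum 'I_n) = [forall i, s i].
Proof.
apply/allP/forallP => h x; first by apply: h; rewrite mem_enum.
by move=> _; apply: h.
Qed.


Lemma real_part (c C n : nat) : (0 < c)%N -> (0 < C)%N -> (0 < n)%N ->
  exists d : nat, (n <= d ^ c * C)%N /\ forall KK : nat,
    INR (KK * 2 ^ (d * c))%N <= INR (KK * 2 ^ c)%N * and_bound c C n.
Proof.
move=> c0 C0 npos.
have cR0 : 0 < INR c by apply: lt_0_INR; apply/ltP.
have CR0 : 0 < INR C by apply: lt_0_INR; apply/ltP.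
have nR0 : 0 < INR n by apply: lt_0_INR; apply/ltP.
set u := Rpower (INR n) (/ INR c).
set v := Rpower (INR C) (/ INR c).
have u0 : 0 < u by apply: exp_pos.
have v0 : 0 < v by apply: exp_pos.
set y := u / v.
have y0 : 0 < y by apply: Rdiv_lt_0_compat.
have [ar1 ar2] := archimed y.
have upos : (0 < up y)%Z by apply: lt_IZR; lra.
set d := Z.to_nat (up y).
have dR : INR d = IZR (up y) by rewrite INR_IZR_INZ /d Znat.Z2Nat.id //; lia.
exists d; split.
  apply/leP; apply: INR_le.
  rewrite mulnE mult_INR INR_expn.
  have e1 : Rmult (pow y c) (pow v c) = INR n.
    by rewrite -Rpow_mult_distr /y /Rdiv Rmult_assoc Rinv_l ?Rmult_1_r ?rp_pow //; lra.
  have e2 : pow v c = INR C by rewrite rp_pow.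
  rewrite -e1 e2; apply: Rmult_le_compat_r; first lra.
  apply: pow_incr; lra.
move=> KK.
rewrite !mulnE !mult_INR !INR_expn.
have i2 : INR 2 = 2 by simpl; lra.
rewrite i2 /and_bound -/u -/v.
have eE : INR c / v * u = y * INR c by rewrite /y; field; lra.
rewrite eE Rmult_assoc; apply: Rmult_le_compat_l; first by apply: pos_INR.
rewrite -!Rpower_pow; try lra.
rewrite -Rpower_plus; apply: Rle_Rpower; first lra.
have : INR d <= y + 1 by lra.
rewrite mult_INR; nra.
Qed.

Local Close Scope R_scope.

Unset Implicit Arguments.

Theorem proposition3p1 (gT : finGroupType) (G : {group gT}) (m : nat)
    (H : nat -> {group gT}) (k : nat -> option nat) :
  solvable G ->
  H 0 = 1%G -> H m = G ->
  (forall i, (i <= m)%N -> (H i <| G)%g) ->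
  (forall i, (i < m)%N -> (H i \proper H i.+1)%g) ->
  (forall i, (1 <= i < m)%N -> is_gamma (k i) (H i) (H i.+1)) ->
  (0 < count_inf k m)%N ->
  exists K : R, Rlt 0 K /\
    forall n : nat, (0 < n)%N ->
      exists (g : gT) (Q : program gT n),
        [/\ (g \in G)%g, (g != 1)%g, prog_over (G : {set gT}) Q,
            Rle (INR (size Q)) (Rmult K (and_bound (count_inf k m) (prod_fin k m) n))
          & forall sigma : 'I_n -> bool,
              prog_eval Q sigma = if [forall i, sigma i] then g else 1%g].
Proof.
move=> _ H0 Hm nH pH gam cpos.
have m1 : (0 < m.-1)%N.
  by move: cpos; rewrite /count_inf; case: (m.-1).
have lt_m : (m.-1 < m)%N by lia.
have em : (m - m.-1 = 1)%N by lia.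
set c := count_inf k m in cpos *.
set C := prod_fin k m.
have KK0 := KK_gt0 k 1 m.
have C0 : (0 < C)%N by apply: prodn_gt0 => l; case: (k l).
exists (INR (KK k 1 m * 2 ^ c)); split.
  apply: lt_0_INR; apply/ltP; by rewrite muln_gt0 KK0 expn_gt0.
move=> n npos.
pose i0 := Ordinal npos.
have [d [dn dK]] := real_part cpos C0 npos.
have [W [sW _ gW goodW]] := levels i0 d Hm nH gam lt_m.
rewrite em in gW goodW.
have [g Wg ng] : exists2 g, g \in W & (g != 1)%g.
  case: (boolP (W \subset [1]%g)) => [sub|].
    have m0 : (0 < m)%N by lia.
    have := pH 0 m0; rewrite H0 -gW.
    rewrite properE => /andP[_]; rewrite gen_subG sub //.
  case/subsetPn => g Wg; rewrite inE => ng; by exists g.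
have [|P [P1 P2 P3]] := goodW g Wg (enum 'I_n).
  by rewrite size_enum_ord NN_eq -/c -/C.
exists g, P; split => //.
- exact: (subsetP sW).
- apply: Rle_trans (le_INR _ _ (leP P2)) _.
  by rewrite cc_count; apply: dK.
- by move=> s; rewrite P3 all_enum_forall.
Qed.
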